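(* Let $V_1$ and $V_2$ be near vector spaces over the same commutative $F$ (no finiteness assumption on the number of blocks). If $BT(V_1)=BT(V_2)$, then $\bar F\cap\mathrm{Aut}(V_1)=\bar F\cap\mathrm{Aut}(V_2)$, i.e. a formal sum $\alpha_1+_\cdot\cdots+_\cdot\alpha_n\in\bar F$ acts as an automorphism on $V_1$ if and only if it acts as an automorphism on $V_2$.
   Context: An F-group is a pair $(V,F)$ where $(V,+)$ is a group and $F$ is a set of endomorphisms of $V$ such that: the maps $0,1,-1$ lie in $F$; $F\setminus\{0\}$ is a subgroup of $\mathrm{Aut}(V,+)$ under composition; and if $\alpha x=\beta x$ with $\alpha,\beta\in F$, $x\in V$ then $\alpha=\beta$ or $x=0$. The quasi-kernel $Q(V)$ is the set of $u\in V$ such that for all $\alpha,\beta\in F$ there is $\gamma\in F$ with $\alpha u+\beta u=\gamma u$. $(V,F)$ is a near vector space if $Q(V)$ generates $(V,+)$; ''over a commutative $F$'' means $\alpha(\beta v)=\beta(\alpha v)$ for all $\alpha,\beta\in F$, $v\in V$. For $u\in Q(V)\setminus\{0\}$, $\alpha+_u\beta$ is the unique $\gamma$ with $\alpha u+\beta u=\gamma u$. Elements $u,v\in Q(V)$ are compatible if $u+\lambda v\in Q(V)$ for some $\lambda\in F\setminus\{0\}$. By André's decomposition theorem $V$ is the direct sum of maximal regular (all nonzero quasi-kernel elements pairwise compatible) near vector subspaces $B_i$, $i\in I$, each nonzero element of $Q(V)$ lying in exactly one $B_i$; these are the blocks. For commutative $F$, all nonzero $u\in Q(V)\cap B_i$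 give the same operation $+_{u_i}$ and $B_i$ is a vector space over the field $(F,+_{u_i},\circ)$. The block type is $BT(V)=\{+_{u_i}: i\in I\}$, a set of binary operations on $F$ (equality of block types means equality of these sets of operations, not isomorphism). $\bar F$ is the set of formal finite sums $\alpha_1+_\cdot\cdots+_\cdot\alpha_n$ of elements of $F$, acting on $V$ by $(\alpha_1+_\cdot\cdots+_\cdot\alpha_n)(v)=\alpha_1(v)+\cdots+\alpha_n(v)$; $\bar F\cap\mathrm{Aut}(V)$ is the set of those formal sums acting on $V$ as automorphisms of $(V,+)$. *)

(* Defs.v *)
From Stdlib Require Import List.
Set Implicit Arguments.

(* The abstract scalar set F (shared by V1 and V2): a set with 0, 1, -1
   and a multiplication (modelling composition of endomorphisms). *)
Record FData := {
  F_car :> Type;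
  F0 : F_car;
  F1 : F_car;
  Fm1 : F_car;
  Fmul : F_car -> F_car -> F_car }.

Definition F_group_with_zero (F : FData) : Prop :=
  F1 F <> F0 F /\ Fm1 F <> F0 F /\
  (forall a b, a <> F0 F -> b <> F0 F -> Fmul F a b <> F0 F) /\
  (forall a b c, Fmul F a (Fmul F b c) = Fmul F (Fmul F a b) c) /\
  (forall a, Fmul F (F1 F) a = a /\ Fmul F a (F1 F) = a) /\
  (forall a, a <> F0 F ->
     exists b, b <> F0 F /\ Fmul F b a = F1 F /\ Fmul F a b = F1 F).

Record VData (F : FData) := {
  V_car :> Type;
  Vadd : V_car -> V_car -> V_car;
  V0 : V_car;
  Vopp : V_car -> V_car;
  act : F -> V_car -> V_car }.

Arguments Vadd {F} v _ _.
Arguments V0 {F} v.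
Arguments Vopp {F} v _.
Arguments act {F} v _ _.

Definition group_axioms (T : Type) (add : T -> T -> T) (z : T) (opp : T -> T)
  : Prop :=
  (forall x y w, add x (add y w) = add (add x y) w) /\
  (forall x, add z x = x /\ add x z = x) /\
  (forall x, add (opp x) x = z /\ add x (opp x) = z).

Definition is_FGroup (F : FData) (V : VData F) : Prop :=
  group_axioms (Vadd V) (V0 V) (Vopp V) /\
  F_group_with_zero F /\
  (forall (a : F) (x y : V), act V a (Vadd V x y) = Vadd V (act V a x) (act V a y)) /\
  (forall (a b : F) (x : V), act V (Fmul F a b) x = act V a (act V b x)) /\
  (forall x : V, act V (F0 F) x = V0 V) /\
  (forall x : V, act V (F1 F) x = x) /\
  (forall x : V, act V (Fm1 F) x = Vopp V x) /\
  (forall (a b : F) (x : V), act V a x = act V b x -> a = b \/ x = V0 V).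

Definition in_Q (F : FData) (V : VData F) (u : V) : Prop :=
  forall a b : F, exists c : F, Vadd V (act V a u) (act V b u) = act V c u.

Inductive gen (F : FData) (V : VData F) (P : V -> Prop) : V -> Prop :=
  | gen_in : forall x, P x -> gen V P x
  | gen_zero : gen V P (V0 V)
  | gen_opp : forall x, gen V P x -> gen V P (Vopp V x)
  | gen_add : forall x y, gen V P x -> gen V P y -> gen V P (Vadd V x y).

Definition near_vector_space (F : FData) (V : VData F) : Prop :=
  is_FGroup V /\ forall v : V, gen V (@in_Q F V) v.

Definition commutative_over (F : FData) (V : VData F) : Prop :=
  forall (a b : F) (v : V), act V a (act V b v) = act V b (act V a v).

(* op is the operation +_u : for u <> 0 in Q(V), op a b is the unique c with
   a u + b u = c u. *)
Definition is_plus_u (F : FData) (V : VData F) (u : V) (op : F -> F -> F) : Prop :=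
  forall a b : F, act V (op a b) u = Vadd V (act V a u) (act V b u).

(* Block type BT(V) = { +_{u_i} : i in I }, as a predicate on binary operations
   of F.  Every nonzero u in Q(V) lies in exactly one block B_i and gives
   the operation +_{u_i}; hence BT(V) = { +_u : u in Q(V) \ {0} }. *)
Definition block_type (F : FData) (V : VData F) (op : F -> F -> F) : Prop :=
  exists u : V, in_Q V u /\ u <> V0 V /\ is_plus_u V u op.

Definition fsum_act (F : FData) (V : VData F) (s : list F) (v : V) : V :=
  fold_right (fun a acc => Vadd V (act V a v) acc) (V0 V) s.

Definition is_aut (F : FData) (V : VData F) (f : V -> V) : Prop :=
  (forall x y : V, f (Vadd V x y) = Vadd V (f x) (f y)) /\
  (forall x y : V, f x = f y -> x = y) /\
  (forall y : V, exists x : V, f x = y).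

(* Main.v *)
Require Import Defs.
From Stdlib Require Import List IndefiniteDescription Classical.
Set Implicit Arguments.

Ltac dG HG := let Ga := fresh "Ga" in let Gz := fresh "Gz" in let Go := fresh "Go" in
  let FG := fresh "FG" in let Hadd := fresh "Hadd" in let Hmul := fresh "Hmul" in
  let H0 := fresh "H0" in let H1 := fresh "H1" in let Hm1 := fresh "Hm1" in let Hfp := fresh "Hfp" in
  destruct HG as [[Ga [Gz Go]] [FG [Hadd [Hmul [H0 [H1 [Hm1 Hfp]]]]]]].

Lemma g_cancel_l (F : FData) (V : VData F) (HG : is_FGroup V) (x y w : V) :
  Vadd V x y = Vadd V x w -> y = w.
Proof.
  intro E. dG HG.
  assert (Vadd V (Vopp V x) (Vadd V x y) = Vadd V (Vopp V x) (Vadd V x w)) as E2 by now rewrite E.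
  rewrite !Ga in E2. destruct (Go x) as [E3 _]. rewrite E3 in E2.
  destruct (Gz y) as [E4 _]; destruct (Gz w) as [E5 _]. congruence.
Qed.

Lemma act_zero (F : FData) (V : VData F) (HG : is_FGroup V) (a : F) :
  act V a (V0 V) = V0 V.
Proof.
  pose proof HG as HG'. dG HG.
  apply (g_cancel_l HG' (act V a (V0 V))).
  rewrite <- Hadd. destruct (Gz (V0 V)) as [E _]. rewrite E.
  destruct (Gz (act V a (V0 V))) as [_ E']. now rewrite E'.
Qed.

Lemma opp_unique (F : FData) (V : VData F) (HG : is_FGroup V) (x y : V) :
  Vadd V x y = V0 V -> y = Vopp V x.
Proof.
  pose proof HG as HG'. intro E. dG HG. apply (g_cancel_l HG' x).
  destruct (Go x) as [_ E2]. congruence.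
Qed.

Lemma opp_opp (F : FData) (V : VData F) (HG : is_FGroup V) (x : V) :
  Vopp V (Vopp V x) = x.
Proof.
  pose proof HG as HG'. dG HG. symmetry. apply (opp_unique HG'). apply (Go x).
Qed.

Lemma opp_add_rev (F : FData) (V : VData F) (HG : is_FGroup V) (x y : V) :
  Vopp V (Vadd V x y) = Vadd V (Vopp V y) (Vopp V x).
Proof.
  pose proof HG as HG'. dG HG. symmetry. apply (opp_unique HG').
  rewrite Ga. rewrite <- (Ga x y). destruct (Go y) as [_ E]. rewrite E.
  destruct (Gz x) as [_ E2]. rewrite E2. apply Go.
Qed.

Lemma comm (F : FData) (V : VData F) (HG : is_FGroup V) (x y : V) :
  Vadd V x y = Vadd V y x.
Proof.
  pose proof HG as HG'. dG HG.
  assert (forall a b : V, Vadd V (Vopp V a) (Vopp V b) = Vadd V (Vopp V b) (Vopp V a)) as K.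
  { intros a b. rewrite <- !Hm1. rewrite <- Hadd. rewrite Hm1. rewrite (opp_add_rev HG').
    now rewrite !Hm1. }
  specialize (K (Vopp V x) (Vopp V y)). now rewrite !(opp_opp HG') in K.
Qed.

Lemma opp_add (F : FData) (V : VData F) (HG : is_FGroup V) (x y : V) :
  Vopp V (Vadd V x y) = Vadd V (Vopp V x) (Vopp V y).
Proof. rewrite (opp_add_rev HG). apply (comm HG). Qed.

Lemma add4 (F : FData) (V : VData F) (HG : is_FGroup V) (a b c d : V) :
  Vadd V (Vadd V a b) (Vadd V c d) = Vadd V (Vadd V a c) (Vadd V b d).
Proof.
  pose proof HG as HG'. dG HG. rewrite <- !Ga. f_equal. rewrite !Ga. f_equal. apply (comm HG').
Qed.

Lemma opp0 (F : FData) (V : VData F) (HG : is_FGroup V) : Vopp V (V0 V) = V0 V.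
Proof. pose proof HG as HG'. dG HG. symmetry. apply (opp_unique HG'). apply Gz. Qed.

Lemma fsum_hom (F : FData) (V : VData F) (HG : is_FGroup V) s (x y : V) :
  fsum_act V s (Vadd V x y) = Vadd V (fsum_act V s x) (fsum_act V s y).
Proof.
  pose proof HG as HG'. induction s as [|a s IH]; simpl.
  - dG HG. symmetry. apply Gz.
  - rewrite IH. dG HG. rewrite Hadd. apply (add4 HG').
Qed.

Lemma hom_zero (F : FData) (V : VData F) (HG : is_FGroup V) (g : V -> V) :
  (forall x y, g (Vadd V x y) = Vadd V (g x) (g y)) -> g (V0 V) = V0 V.
Proof.
  pose proof HG as HG'. intro Hg. dG HG. apply (g_cancel_l HG' (g (V0 V))).
  rewrite <- Hg. destruct (Gz (V0 V)) as [E _]; rewrite E. symmetry; apply Gz.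
Qed.

Lemma hom_opp (F : FData) (V : VData F) (HG : is_FGroup V) (g : V -> V) :
  (forall x y, g (Vadd V x y) = Vadd V (g x) (g y)) -> forall x, g (Vopp V x) = Vopp V (g x).
Proof.
  pose proof HG as HG'. intros Hg x. apply (opp_unique HG'). rewrite <- Hg.
  dG HG. destruct (Go x) as [_ E]; rewrite E. apply (hom_zero HG'). exact Hg.
Qed.

Lemma fsum_comm (F : FData) (V : VData F) (HG : is_FGroup V) (C : commutative_over V) s d (x : V) :
  fsum_act V s (act V d x) = act V d (fsum_act V s x).
Proof.
  pose proof HG as HG'. induction s as [|a s IH]; simpl.
  - symmetry. apply (act_zero HG').
  - rewrite IH. dG HG. rewrite Hadd. now rewrite (C a d).
Qed.

Lemma fsum_Q (F : FData) (V : VData F) (HG : is_FGroup V) s (u : V) :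
  in_Q V u -> exists c, fsum_act V s u = act V c u.
Proof.
  intro Q. induction s as [|a s IH]; simpl.
  - exists (F0 F). dG HG. now rewrite H0.
  - destruct IH as [c Hc]. rewrite Hc. destruct (Q a c) as [e He]. now exists e.
Qed.

Lemma Q_zero (F : FData) (V : VData F) (HG : is_FGroup V) : in_Q V (V0 V).
Proof.
  pose proof HG as HG'. intros a b. exists a. rewrite !(act_zero HG'). dG HG. apply Gz.
Qed.

Lemma Q_act (F : FData) (V : VData F) (HG : is_FGroup V) d (u : V) :
  in_Q V u -> in_Q V (act V d u).
Proof.
  pose proof HG as HG'. intro Q. dG HG.
  destruct FG as [F10 [Fm10 [Fnz [Fass [Fid Finv]]]]].
  destruct (classic (d = F0 F)) as [Hd|Hd].
  - subst d. rewrite H0. apply (Q_zero HG').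
  - destruct (Finv d Hd) as [d' [_ [Hd1 _]]].
    intros a b. destruct (Q (Fmul F a d) (Fmul F b d)) as [e He].
    exists (Fmul F e d'). rewrite <- !Hmul. rewrite He.
    rewrite <- Fass. rewrite Hd1. now rewrite (proj2 (Fid e)).
Qed.

Definition Qsum (F : FData) (V : VData F) (L : list V) : V := fold_right (Vadd V) (V0 V) L.

Lemma Qsum_map_hom (F : FData) (V : VData F) (HG : is_FGroup V) (g : V -> V) L :
  (forall x y, g (Vadd V x y) = Vadd V (g x) (g y)) -> Qsum V (map g L) = g (Qsum V L).
Proof.
  intro Hg. induction L as [|a L IH]; simpl.
  - symmetry. apply (hom_zero HG). exact Hg.
  - unfold Qsum in *. rewrite IH. now rewrite Hg.
Qed.

Lemma Qsum_app (F : FData) (V : VData F) (HG : is_FGroup V) L1 L2 :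
  Qsum V (L1 ++ L2) = Vadd V (Qsum V L1) (Qsum V L2).
Proof.
  dG HG. induction L1 as [|a L IH]; simpl.
  - symmetry; apply Gz.
  - unfold Qsum in *. rewrite IH. apply Ga.
Qed.

Lemma gen_Qsum (F : FData) (V : VData F) (HG : is_FGroup V) (v : V) :
  gen V (in_Q V) v -> exists L, Forall (in_Q V) L /\ v = Qsum V L.
Proof.
  pose proof HG as HG'. induction 1.
  - exists (x :: nil). split. constructor; auto. simpl. dG HG. symmetry; apply Gz.
  - exists nil. split; auto.
  - destruct IHgen as [L [HL E]]. exists (map (Vopp V) L). split.
    + apply Forall_map. eapply Forall_impl; [|exact HL]. intros q Hq.
      dG HG. rewrite <- Hm1. now apply (Q_act HG').
    + rewrite (Qsum_map_hom HG'). now subst. intros; apply (opp_add HG').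
  - destruct IHgen1 as [L1 [HL1 E1]]. destruct IHgen2 as [L2 [HL2 E2]].
    exists (L1 ++ L2). split. apply Forall_app; auto. rewrite (Qsum_app HG'). congruence.
Qed.

Lemma kernel (F : FData) (V : VData F) (HG : is_FGroup V) (C : commutative_over V) s
  (Hs : forall u, in_Q V u -> u <> V0 V -> fsum_act V s u <> V0 V) :
  forall n L, length L = n -> Forall (in_Q V) L -> fsum_act V s (Qsum V L) = V0 V -> Qsum V L = V0 V.
Proof.
  pose proof HG as HG'.
  induction n as [|n IH]; intros L Hl HQ Hk.
  - destruct L; [reflexivity| discriminate].
  - destruct L as [|q L']; [reflexivity|]. simpl in Hl. injection Hl as Hl.
    apply Forall_cons_iff in HQ as [Hq HL'].
    simpl in *. set (y := Qsum V L') in *. set (x := Vadd V q y) in *.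
    destruct (fsum_Q HG' s Hq) as [c Hc].
    set (h := fun z => Vadd V (act V c z) (Vopp V (fsum_act V s z))).
    assert (hh : forall z w, h (Vadd V z w) = Vadd V (h z) (h w)).
    { intros z w. unfold h. dG HG. rewrite Hadd, (fsum_hom HG'), (opp_add HG'). apply (add4 HG'). }
    assert (hq : h q = V0 V). { unfold h. rewrite Hc. dG HG. apply Go. }
    assert (hx : h x = act V c x).
    { unfold h. rewrite Hk, (opp0 HG'). dG HG. apply Gz. }
    assert (hxy : h x = h y). { unfold x. rewrite hh, hq. dG HG. apply Gz. }
    assert (HL'' : Forall (in_Q V) (map h L')).
    { apply Forall_map. eapply Forall_impl; [|exact HL']. intros q' Hq'.
      destruct (fsum_Q HG' s Hq') as [c' Hc']. unfold h. rewrite Hc'.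
      dG HG. rewrite <- Hm1, <- Hmul. destruct (Hq' c (Fmul F (Fm1 F) c')) as [e He].
      rewrite He. now apply (Q_act HG'). }
    assert (Hy : Qsum V (map h L') = V0 V).
    { apply (IH _ (eq_trans (length_map _ _) Hl) HL'').
      rewrite (Qsum_map_hom HG' _ _ hh). fold y. rewrite <- hxy, hx.
      rewrite (fsum_comm HG' C). rewrite Hk. apply (act_zero HG'). }
    rewrite (Qsum_map_hom HG' _ _ hh) in Hy. fold y in Hy.
    assert (Hcx : act V c x = act V (F0 F) x).
    { rewrite <- hx, hxy, Hy. dG HG. now rewrite H0. }
    pose proof HG as HG2. dG HG2.
    destruct (Hfp _ _ _ Hcx) as [Ec|Ex]; [|exact Ex].
    subst c. rewrite H0 in Hc.
    destruct (classic (q = V0 V)) as [Eq|Nq]; [|exfalso; exact (Hs q Hq Nq Hc)].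
    assert (Exy : x = y). { unfold x. rewrite Eq. apply Gz. }
    rewrite Exy. rewrite Exy in Hk. apply (IH L' Hl HL' Hk).
Qed.

Lemma key (F : FData) (V : VData F) (H : near_vector_space V) (C : commutative_over V) s :
  is_aut V (fsum_act V s) <-> (forall u, in_Q V u -> u <> V0 V -> fsum_act V s u <> V0 V).
Proof.
  destruct H as [HG Hgen]. pose proof HG as HG'. split.
  - intros [_ [Hinj _]] u _ Hu E. apply Hu, Hinj. rewrite E. symmetry.
    apply (hom_zero HG'). apply (fsum_hom HG').
  - intro Hs. split; [|split].
    + apply (fsum_hom HG').
    + intros x y E.
      assert (E2 : fsum_act V s (Vadd V x (Vopp V y)) = V0 V).
      { rewrite (fsum_hom HG'), (hom_opp HG'), E. dG HG. apply Go. apply (fsum_hom HG'). }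
      destruct (gen_Qsum HG' (Hgen (Vadd V x (Vopp V y)))) as [L [HL EL]].
      rewrite EL in E2. pose proof (kernel HG' C s Hs (@eq_refl _ (length L)) HL E2) as K.
      rewrite <- EL in K. apply (g_cancel_l HG' (Vopp V y)). rewrite (comm HG') in K.
      dG HG. rewrite (proj1 (Go y)). exact K.
    + intro v. induction (Hgen v) as [u Hq| |x _ [z Hz]|x y _ [z1 H1] _ [z2 H2]].
      * destruct (classic (u = V0 V)) as [Eu|Nu].
        { exists (V0 V). subst. apply (hom_zero HG'). apply (fsum_hom HG'). }
        destruct (fsum_Q HG' s Hq) as [c Hc].
        pose proof HG as HG2. dG HG2.
        destruct FG as [F10 [Fm10 [Fnz [Fass [Fid Finv]]]]].
        destruct (classic (c = F0 F)) as [Ec|Nc].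
        { exfalso. apply (Hs u Hq Nu). rewrite Hc, Ec. apply H0. }
        destruct (Finv c Nc) as [c' [_ [Hc1 _]]].
        exists (act V c' u). rewrite (fsum_comm HG' C), Hc, <- Hmul, Hc1. apply H1.
      * exists (V0 V). apply (hom_zero HG'). apply (fsum_hom HG').
      * exists (Vopp V z). rewrite (hom_opp HG'). now rewrite Hz. apply (fsum_hom HG').
      * exists (Vadd V z1 z2). rewrite (fsum_hom HG'). now rewrite H1, H2.
Qed.

Lemma Q_op (F : FData) (V : VData F) (u : V) : in_Q V u -> exists op, is_plus_u V u op.
Proof.
  intro Q. exists (fun a b => proj1_sig (constructive_indefinite_description _ (Q a b))).
  intros a b. destruct (constructive_indefinite_description _ (Q a b)) as [c Hc]. simpl. auto.
Qed.

Lemma fold_op (F : FData) (V : VData F) (HG : is_FGroup V) (u : V) op s :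
  is_plus_u V u op -> act V (fold_right op (F0 F) s) u = fsum_act V s u.
Proof.
  intro Hop. induction s as [|a s IH]; simpl.
  - dG HG. apply H0.
  - rewrite Hop. now rewrite IH.
Qed.

Lemma transfer (F : FData) (V1 V2 : VData F) (HG1 : is_FGroup V1) (HG2 : is_FGroup V2)
  (HBT : forall op : F -> F -> F, block_type V2 op -> block_type V1 op) s :
  (forall u, in_Q V1 u -> u <> V0 V1 -> fsum_act V1 s u <> V0 V1) ->
  (forall u, in_Q V2 u -> u <> V0 V2 -> fsum_act V2 s u <> V0 V2).
Proof.
  intros Hs w Hw Nw E. destruct (Q_op Hw) as [op Hop].
  destruct (HBT op (ex_intro _ w (conj Hw (conj Nw Hop)))) as [u [Hu [Nu Hopu]]].
  apply (Hs u Hu Nu). rewrite <- (fold_op HG1 s Hopu). rewrite <- (fold_op HG2 s Hop) in E.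
  pose proof HG2 as HG2'. dG HG2'. rewrite <- (H0 w) in E.
  destruct (Hfp _ _ _ E) as [Ec|Ew]; [|contradiction].
  rewrite Ec. dG HG1. apply H2.
Qed.

Theorem mainTheorem8 (F : FData) (V1 V2 : VData F)
  (H1 : near_vector_space V1) (H2 : near_vector_space V2)
  (C1 : commutative_over V1) (C2 : commutative_over V2)
  (HBT : forall op : F -> F -> F, block_type V1 op <-> block_type V2 op)
  (s : list F) (hs : s <> nil) :
  is_aut V1 (fsum_act V1 s) <-> is_aut V2 (fsum_act V2 s).
Proof.
  rewrite (key H1 C1), (key H2 C2).
  destruct H1 as [G1 _], H2 as [G2 _]. split.
  - apply (transfer G1 G2). intro op; apply HBT.
  - apply (transfer G2 G1). intro op; apply HBT.
Qed.
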